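(* Let $D\ge1$, let $F:\mathbb R\to\mathbb R^+$ be strictly decreasing with $A(\alpha):=\int_{\mathbb R^D}F(\frac12|v|^2+\alpha)\,dv<\infty$ for all $\alpha\in\mathbb R$, let $b:=-A^{-1}:(0,\infty)\to\mathbb R$, and let $B\in C^1(0,\infty)$ satisfy $B'=b$, with $\lim_{s\to0^+}B(s)$ existing and $B(0):=\lim_{s\to 0^+}B(s)=0$. Then: (i) $\inf_{s\ge 0}B(s)$ is finite; (ii) $\inf_{s>0}s\,b(s)$ is finite, and for every $s>0$, $s\,b_-(s)\le B_-(s)$.
   Context: Under the assumptions on $F$, $A$ is a continuous strictly decreasing bijection of $\mathbb R$ onto $(0,\infty)$, so $A^{-1}:(0,\infty)\to\mathbb R$ is well defined (and strictly decreasing, so $B$ is strictly convex). For a real number $x$, $x_-:=\max\{-x,0\}$ denotes the negative part. *)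

(* Defs.v *)
From HB Require Import structures.
From mathcomp Require Import all_boot all_order all_algebra.
From mathcomp Require Import all_classical all_reals all_analysis.
Set Implicit Arguments. Unset Strict Implicit. Unset Printing Implicit Defensive.
Import Order.TTheory GRing.Theory Num.Theory.
Import numFieldNormedType.Exports.
Local Open Scope classical_set_scope.
Local Open Scope ring_scope.

(* Integral over R^D of a NONNEGATIVE function,
   points of R^D being represented as sequences of length D.
   Defined as the D-fold iterated Lebesgue integral, which by Tonelli
   equals the integral w.r.t. D-dimensional Lebesgue measure for
   nonnegative measurable integrands. *)
Fixpoint int_RD (R : realType) (D : nat) (f : seq R -> \bar R) : \bar R :=
  match D with
  | 0%N => f [::]
  | D'.+1 => (\int[@lebesgue_measure R]_x int_RD D' (fun t => f (x :: t)))%E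
  end.

Definition sqnorm (R : realType) (v : seq R) : R := \sum_(x <- v) x ^+ 2.

Definition Afun (R : realType) (D : nat) (F : R -> R) (alpha : R) : \bar R :=
  int_RD D (fun v => (F (sqnorm v / 2 + alpha))%:E).

Definition negpart (R : realType) (x : R) : R := Num.max (- x) 0.

(* Main.v *)
Require Import Defs.
From HB Require Import structures.
From mathcomp Require Import all_boot all_order all_algebra.
From mathcomp Require Import all_classical all_reals all_analysis.
From mathcomp Require Import lra.
Import Order.TTheory GRing.Theory Num.Theory.
Import numFieldNormedType.Exports.
Local Open Scope classical_set_scope.
Local Open Scope ring_scope.
Lemma int_RD_mono (R : realType) (D : nat) (f g : seq R -> \bar R) :
  (forall v, (0 <= f v)%E) -> (forall v, (f v <= g v)%E) ->
  (0 <= int_RD D f)%E /\ (int_RD D f <= int_RD D g)%E.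
Proof.
elim: D f g => [|D IH] f g f0 fg /=; first by split.
have H x := IH (fun t => f (x :: t)) (fun t => g (x :: t)) (fun v => f0 _) (fun v => fg _).
split; first by apply: integral_ge0 => x _; case: (H x).
rewrite !ge0_integralTE; last 2 first.
- by move=> x; apply: le_trans (proj2 (H x)); case: (H x).
- by move=> x; case: (H x).
apply: ereal_sup_le => _ [h hf <-]; exists h => // x.
by apply: le_trans (hf x) _; case: (H x).
Qed.

Theorem mainTheorem2 (R : realType) (D : nat) (F b B : R -> R) :
  (1 <= D)%N ->
  (forall x : R, 0 < F x) ->
  (forall x y : R, x < y -> F y < F x) ->
  (forall alpha : R, (Afun D F alpha < +oo)%E) ->
  (* b = - A^{-1} on (0,oo) *)
  (forall s : R, 0 < s -> Afun D F (- b s) = s%:E) ->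
  (* B in C^1(0,oo) with B' = b *)
  (forall s : R, 0 < s -> is_derive s (1 : R) B (b s)) ->
  (forall s : R, 0 < s -> {for s, continuous b}) ->
  (* lim_{s->0+} B(s) exists and equals B(0) := 0 *)
  B s @[s --> (0:R)^'+] --> (0:R) ->
  B 0 = 0 ->
  has_lbound [set B s | s in [set s : R | 0 <= s]] /\
  (has_lbound [set s * b s | s in [set s : R | 0 < s]] /\
   forall s : R, 0 < s -> s * negpart (b s) <= negpart (B s)).
Proof.
move=> _ F0 Fdec Afin Ab HB _ HB0 B00.
have Amono x y : x <= y -> (0 <= Afun D F y)%E /\ (Afun D F y <= Afun D F x)%E.
  move=> xy; apply: int_RD_mono => v; first by rewrite lee_fin ltW.
  rewrite lee_fin; have [->|lt] := eqVneq x y; first by [].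
  by apply/ltW/Fdec; rewrite ltrD2l lt_neqAle lt xy.
have bmono s t : 0 < s -> s <= t -> b s <= b t.
  move=> s0 st; rewrite leNgt; apply/negP => hlt.
  have hst : - b s <= - b t by rewrite lerN2 ltW.
  have [_] := Amono _ _ hst.
  have t0 : 0 < t by exact: lt_le_trans st.
  rewrite (Ab t t0) (Ab s s0) lee_fin.
  move=> ts; have st' : s = t by apply/eqP; rewrite eq_le st ts.
  by move: hlt; rewrite st' ltxx.
have MV x y : 0 < x -> x < y -> (y - x) * b x <= B y - B x <= (y - x) * b y.
  move=> x0 xy.
  have [c cxy ->] : exists2 c, c \in `]x, y[ & B y - B x = b c * (y - x).
    apply: MVT => //.
      move=> z; rewrite in_itv /= => /andP[xz _]; apply: HB; exact: lt_trans xz.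
    apply: derivable_within_continuous => z; rewrite in_itv /= => /andP[xz _].
    by apply: ex_derive; apply: HB; exact: lt_le_trans xz.
  move: cxy; rewrite in_itv /= => /andP[xc cy].
  have yx : 0 <= y - x by rewrite subr_ge0 ltW.
  rewrite [b c * _]mulrC; apply/andP; split; apply: ler_wpM2l => //;
    apply: bmono => //; [exact: ltW| exact: lt_trans xc|exact: ltW].
have Bsb s : 0 < s -> B s <= s * b s.
  move=> s0; rewrite leNgt; apply/negP => hlt.
  set d := B s - s * b s.
  have d0 : 0 < d by rewrite subr_gt0.
  set c := `|b s| + 1.
  have c0 : 0 < c by rewrite ltr_pwDr.
  near (0:R)^'+ => e.
  have h1 : B e <= d / 2.
    by near: e; apply: (cvgr_le _ HB0); rewrite divr_gt0.
  have e0 : 0 < e by near: e; apply: nbhs_right_gt.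
  have es : e < s by near: e; apply: nbhs_right_lt.
  have ec : e < d / 2 / c by near: e; apply: nbhs_right_lt; rewrite !divr_gt0.
  have := MV e s e0 es => /andP[_ h2].
  have h3 : e * c < d / 2 by rewrite -ltr_pdivlMr.
  have h4 : - (e * b s) <= e * c.
    rewrite -mulrN ler_wpM2l ?ltW //.
    by rewrite /c; apply: (le_lt_trans (ler_norm _)); rewrite normrN ltrDl ltr01.
  move: h1 h2 h3 h4; rewrite /d mulrBl; lra.
have [A0ge _] := Amono 0 0 (lexx 0).
set s1 := fine (Afun D F 0) + 1.
have s1_0 : 0 < s1 by rewrite /s1 ltr_pwDr // fine_ge0.
have bs1 : 0 <= b s1.
  rewrite leNgt; apply/negP => h.
  have h0 : 0 <= - b s1 by rewrite oppr_ge0 ltW.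
  have [_] := Amono 0 (- b s1) h0.
  rewrite Ab // -(fineK (x:=Afun D F 0)) ?ge0_fin_numE // lee_fin /s1; lra.
set L := Num.min 0 (B s1 - s1 * b s1).
have BL s : 0 <= s -> L <= B s.
  move=> s0; rewrite le_eqVlt in s0; case/orP: s0 => [/eqP <-|sp].
    by rewrite B00 ge_min lexx.
  rewrite ge_min; apply/orP; right.
  have h := mulr_ge0 (ltW sp) bs1.
  have h' := mulr_ge0 (ltW s1_0) bs1.
  case: (ltgtP s s1) => [lt|gt|->].
  - have /andP[_ h2] := MV s s1 sp lt; move: h2 h; rewrite mulrBl; lra.
  - have /andP[h2 _] := MV s1 s s1_0 gt.
    have : 0 <= (s - s1) * b s1 by rewrite mulr_ge0 // subr_ge0 ltW.
    lra.
  - lra.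
split; first by exists L => _ [s s0 <-]; exact: BL.
split; first by exists L => _ [s s0 <-]; apply: le_trans (BL s (ltW s0)) (Bsb s s0).
move=> s s0; rewrite /negpart; have := Bsb s s0; case: (lerP 0 (b s)) => h.
  by rewrite (max_r (_ : - b s <= 0)) ?mulr0 ?le_max ?lexx ?orbT // oppr_le0.
have hb0 : 0 <= - b s by rewrite oppr_ge0 ltW.
rewrite (max_l hb0) => hb.
rewrite le_max; apply/orP; left; rewrite mulrN; lra.
Unshelve. all: by end_near.
Qed.
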